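(* Let $a,b,e\in\mathbb{R}$ and let $\alpha_i(t)$ ($i=1,\dots,4$) be scalar continuous functions (not necessarily odd). (i) If $a(a+e)<0$, then the system $$\begin{aligned}\dot x&=(ax+by+xz)(1+\alpha_1(t))+x(a+z)\alpha_2(t)+y\alpha_3(t),\\ \dot y&=(-bx+ay+yz)(1+\alpha_1(t))+y(a+z)\alpha_2(t)-x\alpha_3(t),\\ \dot z&=(ez-x^2-y^2-z^2)(1+\alpha_1(t)+\alpha_2(t))\end{aligned}$$ has the solution $$x(t)=\sqrt{-a(a+e)}\,\sin\Big(bt+\int_0^t(b\alpha_1(s)+\alpha_3(s))\,ds\Big),\quad y(t)=\sqrt{-a(a+e)}\,\cos\Big(bt+\int_0^t(b\alpha_1(s)+\alpha_3(s))\,ds\Big),\quad z(t)=-a,$$ lying on the cycle $x^2+y^2=-a(a+e)$, $z=-a$. (ii) The system $$\begin{aligned}\dot x&=(ax+by+xz)(1+\alpha_1(t))+x(a+z)\alpha_2(t)+y\alpha_3(t)-y(x^2+y^2)(4az+x^2+y^2+2z^2)\alpha_4(t),\\ \dot y&=(-bx+ay+yz)(1+\alpha_1(t))+y(a+z)\alpha_2(t)-x\alpha_3(t)+x(x^2+y^2)(4az+x^2+y^2+2z^2)\alpha_4(t),\\ \dot z&=-(2az+x^2+y^2+z^2)(1+\alpha_1(t)+\alpha_2(t))\end{aligned}$$ has the solution $$x(t)=a\sin\Big(bt+\int_0^t(b\alpha_1(s)+\alpha_3(s)+a^4\alpha_4(s))\,ds\Big),\quad y(t)=a\cos\Big(bt+\int_0^t(b\alpha_1(s)+\alpha_3(s)+a^4\alpha_4(s))\,ds\Big),\quad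 z(t)=-a,$$ lying on the cycle $x^2+y^2=a^2$, $z=-a$. *)

(* Defs.v *)
From Stdlib Require Import Reals.
From Coquelicot Require Import Coquelicot.
Open Scope R_scope.

Definition is_solution (f g h : R -> R -> R -> R -> R) (x y z : R -> R) : Prop :=
  forall t : R,
    is_derive x t (f t (x t) (y t) (z t)) /\
    is_derive y t (g t (x t) (y t) (z t)) /\
    is_derive z t (h t (x t) (y t) (z t)).

(* Main.v *)
Require Import Defs.
From Stdlib Require Import Reals Lra.
From Coquelicot Require Import Coquelicot.
From Stdlib Require Import ssreflect.
Open Scope R_scope.

Lemma th_der (c : R) (f : R -> R) (cf : forall t, continuous f t) (t : R) :
  is_derive (fun t => c * t + RInt f 0 t) t (c + f t).
Proof.
  apply: (is_derive_plus (fun t => c * t) (fun t => RInt f 0 t)).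
  - have H := (is_derive_scal (fun u => u) t c 1 (is_derive_id t)).
    rewrite Rmult_1_r in H. exact H.
  - apply: is_derive_RInt; last exact: cf.
    apply: filter_forall => u. apply: RInt_correct.
    apply: ex_RInt_continuous => z _; exact: cf.
Qed.

Lemma sc_der (k : R) (th : R -> R) (t d : R) (Hd : is_derive th t d) :
  is_derive (fun t => k * sin (th t)) t (k * cos (th t) * d) /\
  is_derive (fun t => k * cos (th t)) t (- (k * sin (th t)) * d).
Proof.
  split.
  - have H := is_derive_scal _ _ k _
      (is_derive_comp sin _ t _ _ (is_derive_sin _) Hd).
    replace (k * cos (th t) * d) with (k * scal d (cos (th t))); first exact H.
    rewrite /scal /= /mult /=. ring.
  - have H := is_derive_scal _ _ k _
      (is_derive_comp cos _ t _ _ (is_derive_cos _) Hd).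
    replace (- (k * sin (th t)) * d) with (k * scal d (- sin (th t))); first exact H.
    rewrite /scal /= /mult /=. ring.
Qed.

Lemma zder (c t : R) : is_derive (fun _ : R => c) t 0.
Proof. exact: is_derive_const. Qed.

Lemma is_derive_eqv (f : R -> R) (t d d' : R) : is_derive f t d -> d' = d -> is_derive f t d'.
Proof. by move=> H ->. Qed.

Theorem lemma1 (a b e : R) (al1 al2 al3 al4 : R -> R)
  (c1 : forall t, continuous al1 t) (c2 : forall t, continuous al2 t)
  (c3 : forall t, continuous al3 t) (c4 : forall t, continuous al4 t) :
  (* (i) *)
  (a * (a + e) < 0 ->
   let th := fun t => b * t + RInt (fun s => b * al1 s + al3 s) 0 t in
   let x := fun t => sqrt (- (a * (a + e))) * sin (th t) in
   let y := fun t => sqrt (- (a * (a + e))) * cos (th t) in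
   let z := fun _ : R => - a in
   is_solution
     (fun t x y z => (a * x + b * y + x * z) * (1 + al1 t) + x * (a + z) * al2 t + y * al3 t)
     (fun t x y z => (- b * x + a * y + y * z) * (1 + al1 t) + y * (a + z) * al2 t - x * al3 t)
     (fun t x y z => (e * z - x ^ 2 - y ^ 2 - z ^ 2) * (1 + al1 t + al2 t))
     x y z /\
   (forall t, x t ^ 2 + y t ^ 2 = - (a * (a + e)) /\ z t = - a)) /\
  (* (ii) *)
  (let th := fun t => b * t + RInt (fun s => b * al1 s + al3 s + a ^ 4 * al4 s) 0 t in
   let x := fun t => a * sin (th t) in
   let y := fun t => a * cos (th t) in
   let z := fun _ : R => - a in
   is_solution
     (fun t x y z => (a * x + b * y + x * z) * (1 + al1 t) + x * (a + z) * al2 t + y * al3 t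
                     - y * (x ^ 2 + y ^ 2) * (4 * a * z + x ^ 2 + y ^ 2 + 2 * z ^ 2) * al4 t)
     (fun t x y z => (- b * x + a * y + y * z) * (1 + al1 t) + y * (a + z) * al2 t - x * al3 t
                     + x * (x ^ 2 + y ^ 2) * (4 * a * z + x ^ 2 + y ^ 2 + 2 * z ^ 2) * al4 t)
     (fun t x y z => - (2 * a * z + x ^ 2 + y ^ 2 + z ^ 2) * (1 + al1 t + al2 t))
     x y z /\
   (forall t, x t ^ 2 + y t ^ 2 = a ^ 2 /\ z t = - a)).
Proof.
  split.
  - move=> Hneg th x y z.
    have Hs : sqrt (- (a * (a + e))) ^ 2 = - (a * (a + e)).
    { rewrite /= Rmult_1_r sqrt_sqrt; lra. }
    have Hf : forall t, continuous (fun s => b * al1 s + al3 s) t.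
    { move=> t. apply: continuous_plus; last exact: c3.
      apply: continuous_mult; [apply: continuous_const | exact: c1]. }
    have Hc : forall t, x t ^ 2 + y t ^ 2 = - (a * (a + e)).
    { move=> t. rewrite /x /y.
      have := sin2_cos2 (th t). rewrite /Rsqr => H.
      transitivity (sqrt (- (a * (a + e))) ^ 2 * (sin (th t) * sin (th t) + cos (th t) * cos (th t))).
      ring. rewrite H Rmult_1_r; exact Hs. }
    split; last by move=> t; split; [exact: Hc|].
    move=> t.
    have [D1 D2] := sc_der (sqrt (- (a * (a + e)))) th t _ (th_der b _ Hf t).
    split; [|split].
    + apply: (is_derive_eqv _ _ _ _ D1). rewrite /x /y /z. ring.
    + apply: (is_derive_eqv _ _ _ _ D2). rewrite /x /y /z. ring.
    + apply: (is_derive_eqv _ _ _ _ (zder _ t)).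
      have E : e * z t - x t ^ 2 - y t ^ 2 - z t ^ 2 = 0.
      { have := Hc t. rewrite /z. nra. }
      rewrite E. ring.
  - move=> th x y z.
    have Hf : forall t, continuous (fun s => b * al1 s + al3 s + a ^ 4 * al4 s) t.
    { move=> t. apply: continuous_plus; last first.
      { apply: continuous_mult; [apply: continuous_const | exact: c4]. }
      apply: continuous_plus; last exact: c3.
      apply: continuous_mult; [apply: continuous_const | exact: c1]. }
    have Hc : forall t, x t ^ 2 + y t ^ 2 = a ^ 2.
    { move=> t. rewrite /x /y.
      have := sin2_cos2 (th t). rewrite /Rsqr => H.
      transitivity (a ^ 2 * (sin (th t) * sin (th t) + cos (th t) * cos (th t))).
      ring. rewrite H; ring. }
    split; last by move=> t; split; [exact: Hc|].
    move=> t.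
    have [D1 D2] := sc_der a th t _ (th_der b _ Hf t).
    have Hc' : 4 * a * z t + x t ^ 2 + y t ^ 2 + 2 * z t ^ 2 = - a ^ 2.
    { have := Hc t. rewrite /z. nra. }
    split; [|split].
    + apply: (is_derive_eqv _ _ _ _ D1). rewrite Hc' Hc /x /y /z. ring.
    + apply: (is_derive_eqv _ _ _ _ D2). rewrite Hc' Hc /x /y /z. ring.
    + apply: (is_derive_eqv _ _ _ _ (zder _ t)).
      have E : 2 * a * z t + x t ^ 2 + y t ^ 2 + z t ^ 2 = 0.
      { have := Hc t. rewrite /z. nra. }
      rewrite E. ring.
Qed.
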